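(* Let $m\ge 3$ and let $K\ne\Delta_{[m]}$ be a simplicial complex on $[m]$. Then $\chi(\mathrm{Bier}(K))=m-1$ if and only if $K$ is, up to relabeling of vertices, obtained from one of the three complexes on $[3]$ $$G_4=\{\varnothing,\{1\},\{2\},\{1,2\}\},\quad \Gamma_4=\{\varnothing,\{1\},\{2\},\{3\},\{1,2\},\{1,3\}\},\quad \Gamma_6=\{\varnothing,\{1\},\{2\},\{3\}\}$$ by a finite sequence of the following two operations: (1) taking a cone: a complex $R$ on $[n]$ is replaced by $\{\sigma,\sigma\cup\{n+1\}:\sigma\in R\}$ on $[n+1]$; (2) taking the Alexander dual: a complex $R\ne\Delta_{[n]}$ on $[n]$ is replaced by $R^\vee$, regarded as a complex on $[n]$ via $i'\mapsto i$.
   Context: A simplicial complex $K$ on $[m]=\{1,\dots,m\}$ is a nonempty family of subsets of $[m]$ closed under taking subsets (elements $i$ with $\{i\}\notin K$ are ghost vertices; e.g. $3$ is a ghost vertex of $G_4$). $V(K)=\{i:\{i\}\in K\}$. $\Delta_{[n]}=2^{[n]}$. Let $[n']=\{1',\dots,n'\}$ be a disjoint copy of $[n]$, $I'=\{i':i\in I\}$. For $K\ne\Delta_{[n]}$ on $[n]$ the Alexander dual $K^\vee$ is the complex on $[n']$ with $J'\in K^\vee$ iff $[n]\setminus J\notin K$. The Bier sphere $\mathrm{Bier}(K)$ is the complex on $[n]\sqcup[n']$ with faces $I\sqcup J'$, $I\in K$, $J'\in K^\vee$, $I\cap J=\varnothing$. The chromatic number $\chi(L)$ is the least number of colors in a map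 $c\colon V(L)\to C$ with $c(u)\ne c(v)$ whenever $\{u,v\}\in L$. *)

(* Defs.v *)
From mathcomp Require Import all_boot perm.
Set Implicit Arguments. Unset Strict Implicit. Unset Printing Implicit Defensive.

Definition is_complex (T : finType) (K : {set {set T}}) : Prop :=
  K != set0 /\ (forall A B : {set T}, B \subset A -> A \in K -> B \in K).

(* The full simplex Delta_T is setT : {set {set T}}. *)

Definition alex_dual (T : finType) (K : {set {set T}}) : {set {set T}} :=
  [set J : {set T} | ~: J \notin K].

(* Bier sphere on [n] (inl) disjoint-union [n'] (inr). *)
Definition bier (T : finType) (K : {set {set T}}) : {set {set (T + T)}} :=
  [set S : {set (T + T)} |
     [&& [set i | inl i \in S] \in K,
         [set j | inr j \in S] \in alex_dual K &
         [disjoint [set i | inl i \in S] & [set j | inr j \in S]]]].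

Definition colorable (T : finType) (L : {set {set T}}) (k : nat) : Prop :=
  exists c : T -> nat,
    (forall v, [set v] \in L -> c v < k) /\
    (forall u v, u != v -> [set u; v] \in L -> c u != c v).

Definition chromatic_number_is (T : finType) (L : {set {set T}}) (k : nat) : Prop :=
  colorable L k /\ (forall j, colorable L j -> k <= j).

Definition widen_set (n : nat) (S : {set 'I_n}) : {set 'I_n.+1} :=
  [set widen_ord (leqnSn n) i | i in S].

Definition cone (n : nat) (R : {set {set 'I_n}}) : {set {set 'I_n.+1}} :=
  [set widen_set S | S : {set 'I_n} in R] :|: [set ord_max |: widen_set S | S : {set 'I_n} in R].

(* The three base complexes on [3] = {0,1,2} (vertex i+1 of the paper is i). *)
Definition v1 : 'I_3 := @Ordinal 3 0 isT.
Definition v2 : 'I_3 := @Ordinal 3 1 isT.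
Definition v3 : 'I_3 := @Ordinal 3 2 isT.

Definition G4 : {set {set 'I_3}} := [set set0; [set v1]; [set v2]; [set v1; v2]].
Definition Gamma4 : {set {set 'I_3}} :=
  [set set0; [set v1]; [set v2]; [set v3]; [set v1; v2]; [set v1; v3]].
Definition Gamma6 : {set {set 'I_3}} := [set set0; [set v1]; [set v2]; [set v3]].

Inductive gen_from_base : forall n : nat, {set {set 'I_n}} -> Prop :=
  | gen_G4 : gen_from_base G4
  | gen_Gamma4 : gen_from_base Gamma4
  | gen_Gamma6 : gen_from_base Gamma6
  | gen_cone (n : nat) (R : {set {set 'I_n}}) : gen_from_base R -> gen_from_base (cone R)
  | gen_dual (n : nat) (R : {set {set 'I_n}}) :
      gen_from_base R -> R != setT -> gen_from_base (alex_dual R).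

Definition relabel (n : nat) (s : {perm 'I_n}) (K : {set {set 'I_n}}) : {set {set 'I_n}} :=
  [set (s @: S) | S : {set 'I_n} in K].

(* Main.v *)
Require Import Defs.
From mathcomp Require Import all_boot fingroup perm zify.
Set Implicit Arguments. Unset Strict Implicit. Unset Printing Implicit Defensive.

Section Generic.
Variable T : finType.
Implicit Types (K : {set {set T}}) (I J : {set T}).

Definition lp (S : {set T + T}) : {set T} := [set i | inl i \in S].
Definition rp (S : {set T + T}) : {set T} := [set j | inr j \in S].

Lemma bierE K S : (S \in bier K) =
  [&& lp S \in K, ~: rp S \notin K & [disjoint lp S & rp S]].
Proof. by rewrite /bier inE /alex_dual inE. Qed.

Lemma A_ll K i j : ([set inl i; inl j] \in bier K) = ([set i; j] \in K) && (setT \notin K).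
Proof.
rewrite bierE.
have -> : lp [set inl i; inl j] = [set i; j] by apply/setP => x; rewrite !inE /= ?orbF.
have -> : rp [set inl i; inl j] = set0 by apply/setP => x; rewrite !inE /= ?orbF.
by rewrite setC0 disjoints_subset setC0 subsetT andbT.
Qed.

Lemma A_rr K i j : ([set inr i; inr j] \in bier K) = (~: [set i; j] \notin K) && (set0 \in K).
Proof.
rewrite bierE.
have -> : rp [set inr i; inr j] = [set i; j] by apply/setP => x; rewrite !inE /= ?orbF.
have -> : lp [set inr i; inr j] = set0 by apply/setP => x; rewrite !inE /= ?orbF.
by rewrite disjoints_subset sub0set andbT andbC.
Qed.

Lemma A_lr K i j : ([set inl i; inr j] \in bier K) =
  [&& [set i] \in K, ~: [set j] \notin K & i != j].
Proof.
rewrite bierE.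
have -> : lp [set inl i; inr j] = [set i] by apply/setP => x; rewrite !inE /= ?orbF.
have -> : rp [set inl i; inr j] = [set j] by apply/setP => x; rewrite !inE /= ?orbF.
by rewrite disjoints1 inE eq_sym.
Qed.

Lemma A_rl K i j : ([set inr j; inl i] \in bier K) =
  [&& [set i] \in K, ~: [set j] \notin K & i != j].
Proof. by rewrite setUC -A_lr. Qed.

End Generic.

Lemma colorable_transfer (X Y : finType) (L1 : {set {set X}}) (L2 : {set {set Y}})
  (phi : Y -> X) k :
  injective phi ->
  (forall u v, [set u; v] \in L2 -> [set phi u; phi v] \in L1) ->
  colorable L1 k -> colorable L2 k.
Proof.
move=> phiI H [c [c1 c2]]; exists (fun v => c (phi v)); split.
  by move=> v vL; apply: c1; have := H v v; rewrite !setUid; apply.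
move=> u v uv uvL; apply: c2; last exact: H.
by rewrite (inj_eq phiI).
Qed.

Lemma pig (X : eqType) (s : seq X) (f : X -> nat) k :
  uniq s -> {in s &, injective f} -> {in s, forall x, f x < k} -> size s <= k.
Proof.
move=> us fi fb; rewrite -(size_map f) -(size_iota 0 k); apply: uniq_leq_size.
  by rewrite map_inj_in_uniq.
by move=> y /mapP [x xs ->]; rewrite mem_iota /= fb.
Qed.

Lemma pig_surj (X : eqType) (s : seq X) (f : X -> nat) k :
  uniq s -> {in s &, injective f} -> {in s, forall x, f x < k} -> k <= size s ->
  forall g, g < k -> exists2 x, x \in s & f x = g.
Proof.
move=> us fi fb ks g gk.
have u1 : uniq (map f s) by rewrite map_inj_in_uniq.
have s1 : {subset map f s <= iota 0 k}.
  by move=> y /mapP [x xs ->]; rewrite mem_iota /= fb.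
have s2 : size (iota 0 k) <= size (map f s) by rewrite size_iota size_map.
have [_ E] := uniq_min_size u1 s1 s2.
have : g \in map f s by rewrite E mem_iota.
by case/mapP => x xs ->; exists x.
Qed.

Section Core.
Variable T : finType.
Variable K : {set {set T}}.
Hypothesis Kc : is_complex K.
Hypothesis KT : setT \notin K.

Lemma Kdown (A B : {set T}) : B \subset A -> A \in K -> B \in K.
Proof. by case: Kc => _; apply. Qed.

Lemma K0 : set0 \in K.
Proof.
case: Kc => /set0Pn [A AK] _; exact: (Kdown (sub0set A) AK).
Qed.

Definition blocked (I : {set T}) x := [&& I \in K, x \notin I & x |: I \notin K].

Lemma notK_super (A B : {set T}) : A \subset B -> A \notin K -> B \notin K.
Proof. by move=> AB; apply: contra; apply: Kdown. Qed.

Definition clq (I : {set T}) x : seq (T + T) := map inl (enum I) ++ map inr (enum (~: (x |: I))).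

Lemma clq_uniq (I : {set T}) x : uniq (clq I x).
Proof.
rewrite cat_uniq !map_inj_uniq ?enum_uniq //=; try by move=> ? ? [].
rewrite andbT; apply/hasPn => u /mapP [j _ ->]; apply/mapP => -[i _ E]. by [].
Qed.

Lemma clq_size (I : {set T}) x : x \notin I -> size (clq I x) = #|T| - 1.
Proof.
move=> xI; rewrite size_cat !size_map -!cardE.
have := cardsC (x |: I); rewrite cardsU1 xI; lia.
Qed.

Lemma mem_clq (I : {set T}) x u : u \in clq I x ->
  (exists2 i, i \in I & u = inl i) \/ (exists2 j, j \notin x |: I & u = inr j).
Proof.
rewrite mem_cat => /orP [] /mapP [y]; rewrite mem_enum => yI ->.
  by left; exists y.
by right; exists y; rewrite inE in yI.
Qed.

Lemma clq_face (I : {set T}) x u v : blocked I x -> u \in clq I x -> v \in clq I x ->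
  [set u; v] \in bier K.
Proof.
case/and3P => IK xI xIK.
have cK : forall B : {set T}, B \subset ~: (x |: I) -> ~: B \notin K.
  move=> B HB; apply: (notK_super _ xIK); apply/subsetP => y yC.
  by rewrite inE; apply/negP => yB; have := subsetP HB y yB; rewrite inE yC.
move=> /mem_clq [[i iI ->]|[j jn ->]] /mem_clq [[i' iI' ->]|[j' jn' ->]].
- rewrite A_ll KT andbT; apply: Kdown IK.
  by apply/subsetP => y; rewrite !inE => /orP [] /eqP ->.
- have jC : j' \in ~: (x |: I) by rewrite inE.
  rewrite A_lr (Kdown _ IK) ?sub1set // (cK [set j']) ?sub1set //=.
  by apply: contraNneq jn' => <-; rewrite inE iI orbT.
- have jC : j \in ~: (x |: I) by rewrite inE.
  rewrite A_rl (Kdown _ IK) ?sub1set // (cK [set j]) ?sub1set //=.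
  by apply: contraNneq jn => <-; rewrite inE iI' orbT.
- rewrite A_rr K0 andbT (cK [set j; j']) //.
  by apply/subsetP => y; rewrite !inE => /orP [] /eqP ->; rewrite -(in_setU1 _ x I).
Qed.

Lemma exists_blocked (I : {set T}) : I \in K -> exists F : {set T}, exists x, I \subset F /\ blocked F x.
Proof.
move Hn : #|~: I| => n; elim: n I Hn => [|n IH] I Hn IK.
  move/cards0_eq: Hn => /(congr1 (fun A => ~: A)); rewrite setCK setC0 => E.
  by move: KT; rewrite -E IK.
have [x xI] : exists x, x \notin I.
  apply/existsP; rewrite -negb_forall; apply: contra KT => /forallP H.
  by have -> : setT = I by apply/setP => y; rewrite inE H.
case xIK : (x |: I \in K).
  have [|F [y [sF bF]]] := IH (x |: I) _ xIK.
    have := cardsC (x |: I); have := cardsC I; rewrite cardsU1 xI; lia.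
  by exists F, y; split => //; apply: subset_trans sF; apply: subsetUr.
by exists I, x; rewrite /blocked IK xI xIK.
Qed.

Section Col.
Variable c : T + T -> nat.
Variable k : nat.
Hypothesis c1 : forall v, [set v] \in bier K -> c v < k.
Hypothesis c2 : forall u v, u != v -> [set u; v] \in bier K -> c u != c v.

Lemma clq_inj (I : {set T}) x : blocked I x -> {in clq I x &, injective c}.
Proof.
move=> bI u v us vs cuv; case: (eqVneq u v) => // uv.
by have := c2 uv (clq_face bI us vs); rewrite cuv eqxx.
Qed.

Lemma clq_bd (I : {set T}) x : blocked I x -> {in clq I x, forall u, c u < k}.
Proof. by move=> bI u us; apply: c1; have := clq_face bI us us; rewrite setUid. Qed.

Lemma lower : #|T| - 1 <= k.
Proof.
have [F [x [_ bF]]] := exists_blocked K0.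
have := pig (clq_uniq F x) (clq_inj bF) (clq_bd bF).
by case/and3P: bF => _ xF _; rewrite clq_size.
Qed.

Lemma clq_surj (I : {set T}) x g : k = #|T| - 1 -> blocked I x -> g < k ->
  (exists2 i, i \in I & c (inl i) = g) \/ (exists2 j, j \notin x |: I & c (inr j) = g).
Proof.
move=> ek bI gk; have xI : x \notin I by case/and3P: bI.
have [u us cu] := pig_surj (clq_uniq I x) (clq_inj bI) (clq_bd bI)
   (eq_leq (esym (etrans (clq_size xI) (esym ek)))) gk.
case/mem_clq: us => [[i iI eu]|[j jn eu]]; subst u; [left; exists i|right; exists j] => //.
Qed.

End Col.
End Core.

Section Cone.
Variable T : finType.
Variable K : {set {set T}}.
Hypothesis Kc : is_complex K.
Hypothesis KT : setT \notin K.
Variable c : T + T -> nat.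
Hypothesis c1 : forall v, [set v] \in bier K -> c v < #|T| - 1.
Hypothesis c2 : forall u v, u != v -> [set u; v] \in bier K -> c u != c v.

Let k := #|T| - 1.

Lemma vl i : [set i] \in K -> c (inl i) < k.
Proof. by move=> iK; apply: c1; rewrite -[[set inl i]]setUid A_ll setUid iK KT. Qed.

Lemma cone_or_points : 3 <= #|T| ->
  (exists v, forall I, I \in K -> v |: I \in K) \/
  (#|T| = 3 /\ forall S : {set T}, (S \in K) = (#|S| <= 1)).
Proof.
move=> T3.
pose P v := [&& [set v] \in K, ~: [set v] \notin K & c (inl v) == c (inr v)].
case: (boolP [exists v, P v]) => [/existsP [v /and3P [vK vR /eqP cv]] | noP].
  left; exists v => I IK; case: (boolP (v \in I)) => vI.
    by have -> : v |: I = I by apply/setUidPr; rewrite sub1set.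
  apply/negPn/negP => vIK.
  have bI : blocked K I v by rewrite /blocked IK vI vIK.
  have := @clq_surj _ _ Kc KT c k c1 c2 I v (c (inl v)) (erefl _) bI (vl vK).
  case => [[i iI ci]|[j jn cj]].
  - have iv : i != v by apply: contraNneq vI => <-.
    have := c2 (u := inl i) (v := inr v) isT.
    rewrite A_lr vR iv (Kdown Kc _ IK) ?sub1set // ci cv eqxx.
    by move/(_ isT).
  - have vj : v != j by apply: contraNneq jn => <-; rewrite setU11.
    have jR : ~: [set j] \notin K.
      apply: (notK_super Kc _ vIK); apply/subsetP => y yI; rewrite !inE.
      by apply: contraNneq jn => <-.
    have := c2 (u := inl v) (v := inr j) isT.
    by rewrite A_lr vK jR vj cj eqxx; move/(_ isT).
right.
have sep : forall i j, [set i] \in K -> ~: [set j] \notin K -> c (inl i) != c (inr j).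
  move=> i j iK jR; case: (eqVneq i j) => [eij|ij]; first subst j.
    by apply: contra noP => ce; apply/existsP; exists i; rewrite /P iK jR.
  by apply: c2 => //; rewrite A_lr iK jR ij.
pose a := count (fun g => [exists i, ([set i] \in K) && (c (inl i) == g)]) (iota 0 k).
have F1 : forall I x, blocked K I x -> #|I| = a.
  move=> I x bI; have IK : I \in K by case/and3P: bI.
  have injI : {in I &, injective (fun i => c (inl i))}.
    move=> i i' iI i'I ce; case: (eqVneq i i') => // ii'.
    have := c2 (u := inl i) (v := inl i') ii'.
    rewrite A_ll KT andbT (Kdown Kc _ IK) ?ce ?eqxx.
      by move/(_ isT).
    by apply/subsetP => y; rewrite !inE => /orP [] /eqP ->.
  have E : map (fun i => c (inl i)) (enum I) =i
           filter (fun g => [exists i, ([set i] \in K) && (c (inl i) == g)]) (iota 0 k).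
    move=> g; rewrite mem_filter mem_iota /=; apply/mapP/andP.
      case=> i; rewrite mem_enum => iI ->; split.
        by apply/existsP; exists i; rewrite eqxx (Kdown Kc _ IK) // sub1set.
      by apply: vl; rewrite (Kdown Kc _ IK) // sub1set.
    case=> /existsP [i0 /andP [i0K /eqP ci0]] gk.
    have := @clq_surj _ _ Kc KT c k c1 c2 I x g (erefl _) bI gk.
    case => [[i iI ci]|[j jn cj]]; first by exists i; rewrite ?mem_enum.
    have jR : ~: [set j] \notin K.
      case/and3P: bI => _ _ xIK.
      apply: (notK_super Kc _ xIK); apply/subsetP => y yI; rewrite !inE.
      by apply: contraNneq jn => <-.
    by have := sep _ _ i0K jR; rewrite ci0 cj eqxx.
  have u1 : uniq (map (fun i => c (inl i)) (enum I)).
    rewrite map_inj_in_uniq ?enum_uniq //.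
    by move=> ? ? /[!mem_enum]; apply: injI.
  have u2 := filter_uniq (fun g => [exists i, ([set i] \in K) && (c (inl i) == g)]) (iota_uniq 0 k).
  have := perm_size (uniq_perm u1 u2 E).
  by rewrite size_map -cardE size_filter.
have bd : forall I, I \in K -> #|I| <= a.
  move=> I IK; have [F [x [IF bF]]] := exists_blocked KT IK.
  by rewrite -(F1 _ _ bF) subset_leq_card.
have ext : forall I x, I \in K -> #|I| < a -> x |: I \in K.
  move=> I x IK Ia; case: (boolP (x \in I)) => xI.
    by have -> : x |: I = I by apply/setUidPr; rewrite sub1set.
  apply/negPn/negP => xIK.
  by have := F1 I x; rewrite /blocked IK xI xIK => /(_ isT) E; rewrite E ltnn in Ia.
have Ns : size (enum T) = #|T| by rewrite cardT.
case: (leqP 2 a) => a2.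
  have sK : forall i, [set i] \in K.
    by move=> i; rewrite -(setU0 [set i]); apply: ext (K0 Kc) _; rewrite cards0; lia.
  have := @pig _ (map inl (enum T)) c k.
  rewrite map_inj_uniq ?enum_uniq; last by move=> ? ? [].
  rewrite size_map Ns.
  have -> : #|T| <= k = false by rewrite /k; lia.
  move=> H; suff : false by []; apply: H => //.
    move=> u v /mapP [i _ ->] /mapP [j _ ->] ce; case: (eqVneq i j) => [->//|ij].
    have := c2 (u := inl i) (v := inl j); rewrite ce eqxx inj_eq; last by move=> ? ? [].
    move/(_ ij); rewrite A_ll KT andbT.
    have -> : [set i; j] \in K by rewrite setUC; apply: ext; rewrite ?sK ?cards1.
    by move/(_ isT).
  by move=> u /mapP [i _ ->]; apply: vl.
case: (leqP a (#|T| - 3)) => a3.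
  have big : forall S : {set T}, #|T| - 2 <= #|S| -> S \notin K.
    by move=> S SN; apply/negP => /bd; lia.
  have := @pig _ (map inr (enum T)) c k.
  rewrite map_inj_uniq ?enum_uniq; last by move=> ? ? [].
  rewrite size_map Ns.
  have -> : #|T| <= k = false by rewrite /k; lia.
  move=> H; suff : false by []; apply: H => //.
    move=> u v /mapP [i _ ->] /mapP [j _ ->] ce; case: (eqVneq i j) => [->//|ij].
    have := c2 (u := inr i) (v := inr j); rewrite ce eqxx inj_eq; last by move=> ? ? [].
    move/(_ ij); rewrite A_rr (K0 Kc) andbT big //.
      by move/(_ isT).
    have := cardsC [set i; j]; rewrite cards2 ij; lia.
  move=> u /mapP [j _ ->]; apply: c1; rewrite -[[set inr j]]setUid A_rr setUid (K0 Kc) andbT.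
  by apply: big; rewrite cardsC1; lia.
have a1 : a = 1 by lia.
split; first by lia.
move=> S; apply/idP/idP; first by move/bd; rewrite a1.
rewrite leq_eqVlt ltnS leqn0 => /orP [/cards1P [x ->]|/eqP/cards0_eq ->]; last exact: K0.
by rewrite -(setU0 [set x]); apply: ext (K0 Kc) _; rewrite cards0 a1.
Qed.

End Cone.

Open Scope group_scope.

Lemma V_l (T : finType) (K : {set {set T}}) i :
  ([set inl i] \in bier K) = ([set i] \in K) && (setT \notin K).
Proof. by rewrite -[[set inl i]]setUid A_ll setUid. Qed.

Lemma V_r (T : finType) (K : {set {set T}}) j :
  ([set inr j] \in bier K) = (~: [set j] \notin K) && (set0 \in K).
Proof. by rewrite -[[set inr j]]setUid A_rr setUid. Qed.

Section Perm.
Variable T : finType.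
Implicit Types (s t : {perm T}) (A : {set T}).

Lemma mem_imset_perm s A y : (y \in s @: A) = (s^-1 y \in A).
Proof. by rewrite -{1}(permKV s y) mem_imset //; apply: perm_inj. Qed.

Lemma imset_permK s A : s^-1 @: (s @: A) = A.
Proof. by apply/setP => y; rewrite !mem_imset_perm invgK permK. Qed.

Lemma imset_permKV s A : s @: (s^-1 @: A) = A.
Proof. by apply/setP => y; rewrite !mem_imset_perm invgK permKV. Qed.

Lemma imset_permC s A : s @: (~: A) = ~: (s @: A).
Proof. by apply/setP => y; rewrite !inE !mem_imset_perm inE. Qed.

Lemma imset_permT s : s @: [set: T] = [set: T].
Proof. by apply/setP => y; rewrite !inE mem_imset_perm inE. Qed.

Lemma imset_permM s t A : s @: (t @: A) = (t * s) @: A.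
Proof. by apply/setP => y; rewrite !mem_imset_perm invMg permM. Qed.

Lemma imset_perm1 A : (1 : {perm T}) @: A = A.
Proof. by apply/setP => y; rewrite !mem_imset_perm invg1 perm1. Qed.

Lemma imset_perm2 s i j : s @: [set i; j] = [set s i; s j].
Proof. by rewrite imsetU1 imset_set1. Qed.

End Perm.

Section Relabel.
Variable n : nat.
Implicit Types (s t : {perm 'I_n}) (K : {set {set 'I_n}}).

Lemma relabelE s K S : (S \in relabel s K) = (s^-1 @: S \in K).
Proof.
apply/imsetP/idP => [[X XK ->]|SK]; first by rewrite imset_permK.
by exists (s^-1 @: S); rewrite ?imset_permKV.
Qed.

Lemma relabelM s t K : relabel s (relabel t K) = relabel (t * s) K.
Proof. by apply/setP => S; rewrite !relabelE invMg -imset_permM. Qed.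

Lemma relabel1 K : relabel 1 K = K.
Proof. by apply/setP => S; rewrite relabelE invg1 imset_perm1. Qed.

Lemma relabel_complex s K : is_complex K -> is_complex (relabel s K).
Proof.
case=> /set0Pn [A AK] D; split.
  by apply/set0Pn; exists (s @: A); rewrite relabelE imset_permK.
move=> A' B'; rewrite !relabelE => BA AK'; apply: D AK'; exact: imsetS.
Qed.

Lemma relabelT s K : (setT \in relabel s K) = (setT \in K).
Proof. by rewrite relabelE imset_permT. Qed.

Definition smap (f : 'I_n -> 'I_n) (u : 'I_n + 'I_n) :=
  match u with inl i => inl (f i) | inr i => inr (f i) end.

Lemma smap_inj s : injective (smap s).
Proof. by move=> [i|i] [j|j] //= [/perm_inj ->]. Qed.

Lemma relabel_adj s K u v :
  ([set u; v] \in bier (relabel s K)) = ([set smap s^-1 u; smap s^-1 v] \in bier K).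
Proof.
case: u => i; case: v => j /=;
  rewrite ?A_ll ?A_rr ?A_lr ?A_rl !relabelE ?imset_permC ?imset_perm2 ?imset_set1
     ?imset_permT ?imset0 ?(inj_eq perm_inj) //.
Qed.

Lemma relabel_col s K k : colorable (bier K) k -> colorable (bier (relabel s K)) k.
Proof.
apply: (colorable_transfer (phi := smap s^-1)); first exact: smap_inj.
by move=> u v; rewrite relabel_adj.
Qed.

End Relabel.

Section Dual.
Variable T : finType.
Implicit Types (K : {set {set T}}).

Definition swp (u : T + T) := match u with inl i => inr i | inr i => inl i end.

Lemma swp_inj : injective swp.
Proof. by move=> [i|i] [j|j] //= [->]. Qed.

Lemma dual_adj K u v :
  ([set u; v] \in bier (alex_dual K)) = ([set swp u; swp v] \in bier K).
Proof.
rewrite /alex_dual.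
case: u => i; case: v => j /=;
  rewrite ?A_ll ?A_rr ?A_lr ?A_rl !inE ?setCK ?setC0 ?setCT ?negbK //.
- by rewrite eq_sym; case: (_ \in K); case: (_ \in K).
- by rewrite eq_sym; case: (_ \in K); case: (_ \in K).
Qed.

Lemma dual_col K k : colorable (bier K) k -> colorable (bier (alex_dual K)) k.
Proof.
apply: (colorable_transfer (phi := swp)); first exact: swp_inj.
by move=> u v; rewrite dual_adj.
Qed.

Lemma dual_complex K : is_complex K -> setT \notin K -> is_complex (alex_dual K).
Proof.
case=> _ D KT; split.
  by apply/set0Pn; exists set0; rewrite inE setC0.
move=> A B BA; rewrite !inE; apply: contra; apply: D.
by rewrite setCS.
Qed.

Lemma dual_T K : is_complex K -> setT \notin alex_dual K.
Proof.
move=> Kc; rewrite inE setCT negbK.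
by case: Kc => /set0Pn [A AK] D; apply: D AK; apply: sub0set.
Qed.

End Dual.

Close Scope group_scope.

Section ConeSec.
Variable n : nat.
Local Notation wd := (widen_ord (leqnSn n)).
Implicit Types (R : {set {set 'I_n}}).

Lemma wd_inj : injective wd.
Proof. by move=> i j /(congr1 val) /= /val_inj. Qed.

Lemma wd_max (i : 'I_n) : (wd i == ord_max) = false.
Proof. by apply/negbTE; rewrite -val_eqE /= neq_ltn ltn_ord. Qed.

Lemma lift_wd (i : 'I_n) : lift ord_max i = wd i.
Proof. by apply: val_inj; rewrite /= /bump leqNgt ltn_ord. Qed.

Definition pre (S : {set 'I_n.+1}) : {set 'I_n} := [set i | wd i \in S].

Lemma preE (S : {set 'I_n.+1}) i : (i \in pre S) = (wd i \in S).
Proof. by rewrite inE. Qed.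

Lemma mem_wset (X : {set 'I_n}) i : (wd i \in widen_set X) = (i \in X).
Proof. by rewrite mem_imset //; apply: wd_inj. Qed.

Lemma max_wset (X : {set 'I_n}) : ((ord_max : 'I_n.+1) \in widen_set X) = false.
Proof. by apply/negbTE/imsetP => -[i _ /eqP]; rewrite eq_sym wd_max. Qed.

Lemma ordS_cases (x : 'I_n.+1) : x = ord_max \/ exists i : 'I_n, x = wd i.
Proof. by case: (unliftP ord_max x) => [j ->|->]; [right; exists j; rewrite lift_wd|left]. Qed.

Lemma pre_wset (X : {set 'I_n}) : pre (widen_set X) = X.
Proof. by apply/setP => i; rewrite preE mem_wset. Qed.

Lemma pre_mwset (X : {set 'I_n}) : pre (ord_max |: widen_set X) = X.
Proof. by apply/setP => i; rewrite preE !inE wd_max mem_wset. Qed.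

Lemma decomp (S : {set 'I_n.+1}) : S = if ord_max \in S then ord_max |: widen_set (pre S) else widen_set (pre S).
Proof.
apply/setP => x; case: (ordS_cases x) => [->|[i ->]].
  by case: (boolP (ord_max \in S)) => H; rewrite ?inE ?eqxx ?max_wset ?(negbTE H).
by case: (boolP (ord_max \in S)) => H; rewrite ?inE ?wd_max mem_wset preE.
Qed.

Lemma cone_mem R (S : {set 'I_n.+1}) : (S \in cone R) = (pre S \in R).
Proof.
apply/idP/idP.
  by rewrite inE => /orP [] /imsetP [X XR ->]; rewrite ?pre_wset ?pre_mwset.
move=> SR; rewrite (decomp S) inE; case: ifP => _; apply/orP; [right|left];
  by apply/imsetP; exists (pre S).
Qed.

Lemma preC (S : {set 'I_n.+1}) : pre (~: S) = ~: pre S.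
Proof. by apply/setP => i; rewrite !inE. Qed.

Lemma pre2 i j : pre [set wd i; wd j] = [set i; j].
Proof. by apply/setP => x; rewrite !inE !(inj_eq wd_inj). Qed.

Lemma pre1 i : pre [set wd i] = [set i].
Proof. by apply/setP => x; rewrite !inE !(inj_eq wd_inj). Qed.

Lemma prem1 j : pre [set ord_max; wd j] = [set j].
Proof. by apply/setP => x; rewrite !inE wd_max !(inj_eq wd_inj). Qed.

Lemma prem : pre [set (ord_max : 'I_n.+1)] = set0.
Proof. by apply/setP => x; rewrite !inE wd_max. Qed.

Lemma preT : pre setT = setT.
Proof. by apply/setP => x; rewrite !inE. Qed.

Lemma pre0 : pre set0 = set0.
Proof. by apply/setP => x; rewrite !inE. Qed.

Definition lf (u : 'I_n + 'I_n) : 'I_n.+1 + 'I_n.+1 :=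
  match u with inl i => inl (wd i) | inr i => inr (wd i) end.

Lemma lf_inj : injective lf.
Proof. by move=> [i|i] [j|j] //= [] /val_inj ->. Qed.

Ltac conesimp := rewrite ?A_ll ?A_rr ?A_lr ?A_rl ?V_l ?V_r !cone_mem
  ?preC ?pre2 ?pre1 ?prem1 ?prem ?preT ?pre0 ?(inj_eq wd_inj) ?wd_max ?eqxx //=.

Lemma P1 R u v : ([set lf u; lf v] \in bier (cone R)) = ([set u; v] \in bier R).
Proof. by case: u => i; case: v => j /=; conesimp. Qed.

Lemma P1v R u : ([set lf u] \in bier (cone R)) = ([set u] \in bier R).
Proof. by rewrite -[[set lf u]]setUid P1 setUid. Qed.

Lemma P2 R v : ([set inl ord_max; lf v] \in bier (cone R)) = ([set v] \in bier R).
Proof.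
case: v => j /=; conesimp.
by rewrite eq_sym wd_max /= andbT andbC.
Qed.

Lemma P3 R v : [set inr ord_max; lf v] \in bier (cone R) -> [set v] \in bier R.
Proof.
case: v => j /=; conesimp.
by rewrite setC0 andbT.
Qed.

Lemma P4 R : ([set inl ord_max; inr ord_max] \in bier (cone R)) = false.
Proof. by rewrite A_lr eqxx !andbF. Qed.

Lemma Vm R : ([set inl ord_max] \in bier (cone R)) = (set0 \in R) && (setT \notin R).
Proof. by conesimp. Qed.

Lemma u_cases (u : 'I_n.+1 + 'I_n.+1) :
  (exists w, u = lf w) \/ u = inl ord_max \/ u = inr ord_max.
Proof.
case: u => x; case: (ordS_cases x) => [->|[i ->]]; auto.
  by left; exists (inl i).
by left; exists (inr i).
Qed.

End ConeSec.

Lemma pair_vertex (T : finType) (K : {set {set T}}) u v :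
  is_complex K -> setT \notin K -> [set u; v] \in bier K -> [set u] \in bier K.
Proof.
move=> Kc KT; have K0' := K0 Kc.
case: u => i; case: v => j; rewrite ?A_ll ?A_rr ?A_lr ?A_rl ?V_l ?V_r ?KT ?K0' ?andbT.
- by move=> H; apply: (Kdown Kc _ H); rewrite sub1set !inE eqxx.
- by case/and3P.
- by case/and3P.
- apply: contra => H; apply: (Kdown Kc _ H).
  by rewrite setCS sub1set !inE eqxx.
Qed.

Section CU.
Variable n : nat.
Local Notation wd := (widen_ord (leqnSn n)).

Definition down (u : 'I_n.+1 + 'I_n.+1) : option ('I_n + 'I_n) :=
  match u with
  | inl x => omap inl (unlift ord_max x)
  | inr x => omap inr (unlift ord_max x)
  end.

Lemma down_lf w : down (lf w) = Some w.
Proof. by case: w => i /=; rewrite -lift_wd liftK. Qed.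

Lemma down_max : down (inl ord_max) = None /\ down (inr ord_max) = None.
Proof. by rewrite /= unlift_none. Qed.

Lemma cone_up (R : {set {set 'I_n}}) k :
  colorable (bier R) k -> colorable (bier (cone R)) k.+1.
Proof.
case=> c [c1 c2].
exists (fun u => if down u is Some w then c w else k); split.
  move=> v; case: (u_cases v) => [[w ->]|[->|->]]; rewrite ?down_lf /= ?unlift_none //.
  by rewrite P1v => /c1; lia.
have vx : forall w, [set w] \in bier R -> c w != k.
  by move=> w /c1; rewrite neq_ltn => ->.
move=> u v; case: (u_cases u) => [[w ->]|[->|->]]; case: (u_cases v) => [[w' ->]|[->|->]];
  rewrite ?down_lf /= ?unlift_none ?eqxx //.
- by rewrite (inj_eq (@lf_inj n)) P1; apply: c2.
- by move=> _; rewrite setUC P2; apply: vx.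
- by move=> _; rewrite setUC => /P3; apply: vx.
- by move=> _; rewrite P2 eq_sym; apply: vx.
- by move=> _; rewrite P4.
- by move=> _ /P3; rewrite eq_sym; apply: vx.
- by move=> _; rewrite setUC P4.
Qed.

Lemma cone_down (R : {set {set 'I_n}}) k :
  is_complex R -> setT \notin R ->
  colorable (bier (cone R)) k.+1 -> colorable (bier R) k.
Proof.
move=> Rc RT [c [c1 c2]].
pose c0 := c (inl ord_max).
have c0k : c0 < k.+1 by apply: c1; rewrite Vm (K0 Rc) RT.
have ne0 : forall w, [set w] \in bier R -> c (lf w) != c0.
  move=> w wv; rewrite eq_sym; apply: c2; last by rewrite P2.
  case: w {wv} => i //=.
  by apply/eqP => -[] E; move: (ltn_ord i); rewrite -E ltnn.
have bd : forall w, [set w] \in bier R -> c (lf w) < k.+1.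
  by move=> w wv; apply: c1; rewrite P1v.
exists (fun w => if c (lf w) < c0 then c (lf w) else (c (lf w)).-1); split.
  move=> w wv; have := ne0 w wv; have := bd w wv; case: ifP; lia.
move=> u v uv uvR.
have uV := pair_vertex Rc RT uvR.
have vV : [set v] \in bier R by apply: (pair_vertex Rc RT (v := u)); rewrite setUC.
have := ne0 _ uV; have := ne0 _ vV.
have : c (lf u) != c (lf v) by apply: c2; rewrite ?(inj_eq (@lf_inj n)) ?P1.
do 2 case: ifP; lia.
Qed.

Lemma cone_of (K : {set {set 'I_n.+1}}) :
  is_complex K -> (forall I, I \in K -> ord_max |: I \in K) ->
  K = cone [set S : {set 'I_n} | widen_set S \in K].
Proof.
move=> Kc Kcone; apply/setP => S; rewrite cone_mem inE.
have s1 : widen_set (pre S) \subset S.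
  by apply/subsetP => x /imsetP [i]; rewrite preE => iS ->.
have s2 : S \subset ord_max |: widen_set (pre S).
  apply/subsetP => x xS; case: (ordS_cases x) => [->|[i ei]]; first by rewrite setU11.
  by subst x; rewrite setU1r // mem_wset preE.
apply/idP/idP => [SK|wK]; first exact: (Kdown Kc s1 SK).
exact: (Kdown Kc s2 (Kcone _ wK)).
Qed.

Lemma cone_R_complex (K : {set {set 'I_n.+1}}) :
  is_complex K -> setT \notin K -> (forall I, I \in K -> ord_max |: I \in K) ->
  is_complex [set S : {set 'I_n} | widen_set S \in K] /\
  setT \notin [set S : {set 'I_n} | widen_set S \in K].
Proof.
move=> Kc KT Kcone; split; first split.
- apply/set0Pn; exists set0; rewrite inE /widen_set imset0; exact: K0 Kc.
- move=> A B BA; rewrite !inE; apply: (Kdown Kc); exact: imsetS.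
- rewrite inE; apply: contra KT => H.
  have -> : [set: 'I_n.+1] = ord_max |: widen_set setT.
    apply/setP => x; rewrite !inE; case: (ordS_cases x) => [->|[i ->]]; first by rewrite eqxx.
    by rewrite mem_wset inE orbT.
  exact: Kcone.
Qed.

End CU.

Lemma ord3 (x : 'I_3) : x = v1 \/ x = v2 \/ x = v3.
Proof.
case: x => [[|[|[|m]]] p]; [left|right;left|right;right|by []]; exact: val_inj.
Qed.

Lemma eq3 (A B : {set 'I_3}) :
  (A == B) = [&& (v1 \in A) == (v1 \in B), (v2 \in A) == (v2 \in B) & (v3 \in A) == (v3 \in B)].
Proof.
apply/eqP/and3P => [->|[/eqP e1 /eqP e2 /eqP e3]]; first by rewrite !eqxx.
by apply/setP => x; case: (ord3 x) => [->|[->|->]].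
Qed.

Lemma card3 (S : {set 'I_3}) : #|S| = (v1 \in S) + (v2 \in S) + (v3 \in S).
Proof.
rewrite -sum1_card big_mkcond /= !big_ord_recl big_ord0.
have -> : (lift ord0 (lift ord0 ord0) : 'I_3) = v3 by apply: val_inj.
have -> : (lift ord0 ord0 : 'I_3) = v2 by apply: val_inj.
have -> : (ord0 : 'I_3) = v1 by apply: val_inj.
by case: (v1 \in S); case: (v2 \in S); case: (v3 \in S).
Qed.

Lemma G4E S : (S \in G4) = (v3 \notin S).
Proof.
rewrite !inE !eq3 !inE.
by case: (v1 \in S); case: (v2 \in S); case: (v3 \in S).
Qed.

Lemma Gamma4E S : (S \in Gamma4) = ((v2 \in S) + (v3 \in S) <= 1).
Proof.
rewrite !inE !eq3 !inE.
by case: (v1 \in S); case: (v2 \in S); case: (v3 \in S).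
Qed.

Lemma Gamma6E S : (S \in Gamma6) = ((v1 \in S) + (v2 \in S) + (v3 \in S) <= 1).
Proof.
rewrite !inE !eq3 !inE.
by case: (v1 \in S); case: (v2 \in S); case: (v3 \in S).
Qed.


Lemma col_G4 : colorable (bier G4) 2.
Proof.
exists (fun u => match u with inl i | inr i => nat_of_bool (i == v2) end); split.
  by move=> [i|i] _; case: (i == v2).
move=> [i|i] [j|j]; case: (ord3 i) => [->|[->|->]]; case: (ord3 j) => [->|[->|->]];
  rewrite ?A_ll ?A_rr ?A_lr ?A_rl !G4E !inE //.
Qed.

Lemma col_Gamma4 : colorable (bier Gamma4) 2.
Proof.
exists (fun u => match u with inl i | inr i => nat_of_bool (i != v1) end); split.
  by move=> [i|i] _; case: (i != v1).
move=> [i|i] [j|j]; case: (ord3 i) => [->|[->|->]]; case: (ord3 j) => [->|[->|->]];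
  rewrite ?A_ll ?A_rr ?A_lr ?A_rl !Gamma4E !inE //.
Qed.

Lemma col_Gamma6 : colorable (bier Gamma6) 2.
Proof.
exists (fun u => match u with inl i => 0 | inr i => 1 end); split.
  by move=> [i|i] _.
move=> [i|i] [j|j]; case: (ord3 i) => [->|[->|->]]; case: (ord3 j) => [->|[->|->]];
  rewrite ?A_ll ?A_rr ?A_lr ?A_rl !Gamma6E !inE //.
Qed.

Open Scope group_scope.

Lemma cls (K : {set {set 'I_3}}) : is_complex K -> setT \notin K ->
  (forall I, I \in K -> v1 |: I \in K) ->
  exists K0 (t : {perm 'I_3}), gen_from_base K0 /\ K = relabel t K0.
Proof.
move=> Kc KT Kv.
have key : forall S, (S \in K) = [&& ~~ ((v2 \in S) && (v3 \in S)),
    (v2 \in S) ==> ([set v2] \in K) & (v3 \in S) ==> ([set v3] \in K)].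
  move=> S.
  have -> : (S \in K) = (S :\ v1 \in K).
    apply/idP/idP => H; first by apply: (Kdown Kc _ H); apply: subsetDl.
    apply: (Kdown Kc _ (Kv _ H)); apply/subsetP => x xS.
    by rewrite !inE xS andbT; case: (x == v1).
  case b2 : (v2 \in S); case b3 : (v3 \in S) => /=.
  - have -> : S :\ v1 = [set v2; v3] by apply/eqP; rewrite eq3 !inE b2 b3.
    apply/negP => H; have := Kv _ H.
    have -> : v1 |: [set v2; v3] = setT by apply/eqP; rewrite eq3 !inE.
    by rewrite (negbTE KT).
  - have -> : S :\ v1 = [set v2] by apply/eqP; rewrite eq3 !inE b2 b3.
    by rewrite andbT.
  - by have -> : S :\ v1 = [set v3] by apply/eqP; rewrite eq3 !inE b2 b3.
  - have -> : S :\ v1 = set0 by apply/eqP; rewrite eq3 !inE b2 b3.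
    exact: K0 Kc.
case k2 : ([set v2] \in K); case k3 : ([set v3] \in K).
- exists Gamma4, 1; split; first exact: gen_Gamma4.
  apply/setP => S; rewrite relabel1 key Gamma4E k2 k3.
  by case: (v2 \in S); case: (v3 \in S).
- exists G4, 1; split; first exact: gen_G4.
  apply/setP => S; rewrite relabel1 key G4E k2 k3.
  by case: (v2 \in S); case: (v3 \in S).
- exists G4, (tperm v2 v3); split; first exact: gen_G4.
  apply/setP => S; rewrite relabelE G4E mem_imset_perm invgK tpermR key k2 k3.
  by case: (v2 \in S); case: (v3 \in S).
- exists (alex_dual Gamma4), 1; split.
    apply: gen_dual; first exact: gen_Gamma4.
    by apply/eqP => E; have := Gamma4E setT; rewrite E !inE.
  apply/setP => S; rewrite relabel1 key inE Gamma4E !inE k2 k3.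
  by case: (v2 \in S); case: (v3 \in S).
Qed.

Lemma base3 (K : {set {set 'I_3}}) : is_complex K -> setT \notin K ->
  colorable (bier K) 2 ->
  exists K0 (t : {perm 'I_3}), gen_from_base K0 /\ K = relabel t K0.
Proof.
move=> Kc KT [c [c1 c2]].
have c1' : forall v, [set v] \in bier K -> c v < #|'I_3| - 1 by move=> v /c1; rewrite card_ord.
case: (cone_or_points Kc KT c1' c2) => [|[v Hv]|[_ H]]; first by rewrite card_ord.
  pose s := tperm v1 v.
  have [K0 [t [g E]]] : exists K0 (t : {perm 'I_3}), gen_from_base K0 /\ relabel s K = relabel t K0.
    apply: cls; first exact: relabel_complex.
      by rewrite relabelT.
    move=> I; rewrite !relabelE imsetU1 tpermV tpermL; exact: Hv.
  exists K0, (t * s); split => //.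
  by rewrite -relabelM -E relabelM tperm2 relabel1.
exists Gamma6, 1; split; first exact: gen_Gamma6.
by apply/setP => S; rewrite relabel1 H Gamma6E card3.
Qed.

Close Scope group_scope.

Lemma lift_relabel n (s' : {perm 'I_n}) (R0 : {set {set 'I_n}}) :
  cone (relabel s' R0) = relabel (lift_perm ord_max ord_max s') (cone R0).
Proof.
apply/setP => S; rewrite relabelE !cone_mem relabelE; congr (_ \in R0).
apply/setP => i; rewrite preE !mem_imset_perm !invgK preE.
by rewrite -[widen_ord _ i]lift_wd lift_perm_lift lift_wd.
Qed.

Lemma gen_col n (R : {set {set 'I_n}}) : gen_from_base R -> 3 <= n /\ colorable (bier R) (n - 1).
Proof.
elim=> {n R}.
- by split; last exact: col_G4.
- by split; last exact: col_Gamma4.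
- by split; last exact: col_Gamma6.
- move=> n R _ [n3 col]; split; first lia.
  have := cone_up col; have -> : (n - 1).+1 = n by lia.
  by rewrite subn1.
- by move=> n R _ [n3 col] _; split => //; apply: dual_col.
Qed.

Lemma setT_in (T : finType) (K : {set {set T}}) : is_complex K -> K != setT -> setT \notin K.
Proof.
move=> Kc; apply: contra => TK; apply/eqP/setP => S; rewrite inE.
by apply: (Kdown Kc _ TK); apply: subsetT.
Qed.

Lemma backward m : 3 <= m -> forall K : {set {set 'I_m}}, is_complex K -> setT \notin K ->
  colorable (bier K) (m - 1) ->
  exists K0 (s : {perm 'I_m}), gen_from_base K0 /\ K = relabel s K0.
Proof.
elim: m => [//|n IH] n3 K Kc KT col.
case: (ltngtP n 2) => [n2|n2|n2]; first by lia.
- have n3' : 3 <= n by [].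
  case: (col) => c [c1 c2].
  have c1' : forall v, [set v] \in bier K -> c v < #|'I_n.+1| - 1 by move=> v /c1; rewrite card_ord.
  case: (cone_or_points Kc KT c1' c2) => [|[v Hv]|[N3 _]]; first by rewrite card_ord.
  + pose s := tperm v ord_max.
    pose K' := relabel s K.
    have K'c : is_complex K' by apply: relabel_complex.
    have K'T : setT \notin K' by rewrite relabelT.
    have Kv' : forall I, I \in K' -> ord_max |: I \in K'.
      by move=> I; rewrite !relabelE imsetU1 tpermV tpermR; exact: Hv.
    have EK := cone_of K'c Kv'.
    have [Rc RT] := cone_R_complex K'c K'T Kv'.
    set R := [set S : {set 'I_n} | widen_set S \in K'] in EK Rc RT.
    have colR : colorable (bier R) (n - 1).
      apply: cone_down Rc RT _; have -> : (n - 1).+1 = n by lia.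
      by rewrite -EK; apply: relabel_col; rewrite subn1 in col.
    have [R0 [s' [g ER]]] := IH n3' R Rc RT colR.
    exists (cone R0), (lift_perm ord_max ord_max s' * s)%g; split; first exact: gen_cone.
    have -> : K = relabel s K' by rewrite /K' relabelM tperm2 relabel1.
    by rewrite EK ER lift_relabel relabelM.
  + by rewrite card_ord in N3; lia.
- by subst n; apply: base3.
Qed.

Theorem mainTheorem10 (m : nat) (K : {set {set 'I_m}}) :
  3 <= m -> is_complex K -> K != setT ->
  (chromatic_number_is (bier K) (m - 1) <->
   exists (K0 : {set {set 'I_m}}) (s : {perm 'I_m}),
     gen_from_base K0 /\ K = relabel s K0).
Proof.
move=> m3 Kc KnT; have KT := setT_in Kc KnT.
split => [[col _]|[K0 [s [g EK]]]]; first exact: backward.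
split.
  by rewrite EK; apply: relabel_col; case: (gen_col g).
move=> j [c [c1 c2]]; have := lower Kc KT c1 c2.
by rewrite card_ord.
Qed.
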